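(* If $P\subset\mathbb R^d$ is a rational $d$-polytope with $N(P)=-N(P)$, then $\Lambda_P=\Delta_P$, i.e. every upper region of $\Lambda_P$ is an open cell of $\Delta_P$ and conversely.
   Context: A rational $d$-polytope has a unique irredundant presentation $P=\bigcap_{i=1}^m\{\bm x:(\bm a_i,\bm x)\ge b_i\}$ with $(\bm a_i,b_i)\in\mathbb Z^{d+1}$ primitive; $N(P)=\{\bm a_1,\dots,\bm a_m\}$. Upper regions: nonempty sets $U_{\bm c}=\{\bm x: c_i-1<(\bm a_i,\bm x)\le c_i\ \forall i\}$, $\bm c\in\mathbb Z^m$; $\Lambda_P$ is the set of them. $\Delta_P$: the open cells of the arrangement $\{(\bm a_i,\bm x)=k: i\le m, k\in\mathbb Z\}$, i.e. nonempty sets $A_1\cap\cdots\cap A_m$ with each $A_i$ either $\{(\bm a_i,\bm x)=k\}$ or $\{k<(\bm a_i,\bm x)<k+1\}$, $k\in\mathbb Z$. *)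

(* Defs.v *)
From HB Require Import structures.
From mathcomp Require Import all_boot all_order all_algebra.
From mathcomp Require Import boolp classical_sets reals.
Set Implicit Arguments. Unset Strict Implicit. Unset Printing Implicit Defensive.
Import Order.TTheory GRing.Theory Num.Theory.
Local Open Scope ring_scope.
Local Open Scope classical_set_scope.

Definition dotZ {R : realType} {d : nat} (a : 'I_d -> int) (x : 'I_d -> R) : R :=
  \sum_(j < d) (a j)%:~R * x j.

Definition primitive {d : nat} (a : 'I_d -> int) (b : int) : Prop :=
  forall k : int, (forall j, (k %| a j)%Z) -> (k %| b)%Z -> `|k| = 1.

Definition polyhedron {R : realType} {d m : nat}
  (A : 'I_m -> 'I_d -> int) (b : 'I_m -> int) : set ('I_d -> R) :=
  [set x | forall i, (b i)%:~R <= dotZ (A i) x].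

Definition irredundant {R : realType} {d m : nat}
  (A : 'I_m -> 'I_d -> int) (b : 'I_m -> int) : Prop :=
  forall i, exists x : 'I_d -> R,
    (forall j, j != i -> (b j)%:~R <= dotZ (A j) x) /\ dotZ (A i) x < (b i)%:~R.

Definition bounded {R : realType} {d : nat} (P : set ('I_d -> R)) : Prop :=
  exists M : R, forall x, P x -> forall j, `|x j| <= M.

Definition full_dimensional {R : realType} {d : nat} (P : set ('I_d -> R)) : Prop :=
  exists (x0 : 'I_d -> R) (e : R), 0 < e /\
    forall y : 'I_d -> R, (forall j, `|y j - x0 j| < e) -> P y.

Definition rational_polytope_presentation {R : realType} {d m : nat}
  (P : set ('I_d -> R)) (A : 'I_m -> 'I_d -> int) (b : 'I_m -> int) : Prop :=
  [/\ P = polyhedron A b, forall i, primitive (A i) (b i), irredundant (R:=R) A b,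
      bounded P & full_dimensional P].

Definition normals {d m : nat} (A : 'I_m -> 'I_d -> int) : set ('I_d -> int) :=
  [set a | exists i, a = A i].
Definition neg_set {d : nat} (S : set ('I_d -> int)) : set ('I_d -> int) :=
  [set a | S (fun j => - a j)].

Definition upper_region {R : realType} {d m : nat}
  (A : 'I_m -> 'I_d -> int) (c : 'I_m -> int) : set ('I_d -> R) :=
  [set x | forall i, (c i)%:~R - 1 < dotZ (A i) x /\ dotZ (A i) x <= (c i)%:~R].

Definition Lambda {R : realType} {d m : nat} (A : 'I_m -> 'I_d -> int)
  : set (set ('I_d -> R)) :=
  [set U | exists c, U = upper_region A c /\ U !=set0].

(* Open cell of the arrangement {(a_i,x) = k}: s i selects the hyperplane
   (a_i,x) = k i, otherwise the open slab k i < (a_i,x) < k i + 1. *)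
Definition arr_cell {R : realType} {d m : nat}
  (A : 'I_m -> 'I_d -> int) (s : 'I_m -> bool) (k : 'I_m -> int) : set ('I_d -> R) :=
  [set x | forall i, if s i then dotZ (A i) x = (k i)%:~R
                     else (k i)%:~R < dotZ (A i) x /\ dotZ (A i) x < (k i)%:~R + 1].

Definition Delta {R : realType} {d m : nat} (A : 'I_m -> 'I_d -> int)
  : set (set ('I_d -> R)) :=
  [set U | exists s k, U = arr_cell A s k /\ U !=set0].

(* Main.v *)
Require Import Defs.
From HB Require Import structures.
From mathcomp Require Import all_boot all_order all_algebra.
From mathcomp Require Import boolp classical_sets reals.
From mathcomp Require Import lra.
Import Order.TTheory GRing.Theory Num.Theory.
Local Open Scope ring_scope.
Local Open Scope classical_set_scope.

Lemma key (R : realType) (p q : int) : (p%:~R : R) < q%:~R + 1 -> (p%:~R : R) <= q%:~R.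
Proof.
move=> h; have : (p%:~R : R) < (q + 1)%:~R by rewrite intrD.
by rewrite ltr_int ler_int -ltzD1.
Qed.

Lemma dotZN (R : realType) d (a : 'I_d -> int) (x : 'I_d -> R) :
  dotZ (fun t => - a t) x = - dotZ a x.
Proof. rewrite /dotZ -sumrN; apply: eq_bigr => t _. by rewrite mulrNz mulNr. Qed.

Lemma coordL (R : realType) (u v : R) (ci cj : int) :
  ci%:~R - 1 < u -> u <= ci%:~R -> cj%:~R - 1 < - u -> - u <= cj%:~R ->
  ci%:~R - 1 < v -> v <= ci%:~R -> cj%:~R - 1 < - v -> - v <= cj%:~R ->
  if u == ci%:~R then v = ci%:~R
  else (ci - 1)%:~R < v /\ v < (ci - 1)%:~R + 1.
Proof.
move=> h1 h2 h3 h4 h5 h6 h7 h8; rewrite intrB.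
case: eqP => [eu|neu].
  have k1 := @key R cj (- ci); rewrite intrN in k1.
  have : cj%:~R <= - ci%:~R :> R by apply: k1; lra.
  lra.
have k1 := @key R cj (1 - ci); rewrite intrB ?intrN ?mulr1z in k1.
have k2 := @key R (1 - ci) cj; rewrite intrB ?intrN ?mulr1z in k2.
have lt : u < ci%:~R by rewrite lt_neqAle h2 andbT; apply/eqP.
have : cj%:~R <= 1 - ci%:~R :> R by apply: k1; lra.
have : 1 - ci%:~R <= cj%:~R :> R by apply: k2; lra.
lra.
Qed.

Lemma coordD (R : realType) (u v : R) (si sj : bool) (ki kj : int) :
  (if si then u = ki%:~R else ki%:~R < u /\ u < ki%:~R + 1) ->
  (if sj then - u = kj%:~R else kj%:~R < - u /\ - u < kj%:~R + 1) ->
  (let ci := if si then ki else ki + 1 in ci%:~R - 1 < v /\ v <= ci%:~R) ->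
  (let cj := if sj then kj else kj + 1 in cj%:~R - 1 < - v /\ - v <= cj%:~R) ->
  if si then v = ki%:~R else ki%:~R < v /\ v < ki%:~R + 1.
Proof.
have k1 := @key R kj (- ki); rewrite intrN in k1.
have k2 := @key R (- ki) kj; rewrite intrN in k2.
have k3 := @key R kj (- ki - 1); rewrite intrB ?intrN ?mulr1z in k3.
have k4 := @key R (- ki - 1) kj; rewrite intrB ?intrN ?mulr1z in k4.
case: si; case: sj => /=; rewrite ?intrD => h1 h2 [h3 h4] [h5 h6].
- lra.
- have : - ki%:~R <= kj%:~R :> R by apply: k2; lra.
  lra.
- have : kj%:~R <= - ki%:~R - 1 :> R by apply: k3; lra.
  lra.
- have : kj%:~R <= - ki%:~R - 1 :> R by apply: k3; lra.
  have : - ki%:~R - 1 <= kj%:~R :> R by apply: k4; lra.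
  lra.
Qed.

Theorem mainTheorem6 (R : realType) (d m : nat) (P : set ('I_d -> R))
  (A : 'I_m -> 'I_d -> int) (b : 'I_m -> int) :
  rational_polytope_presentation P A b ->
  normals A = neg_set (normals A) ->
  Lambda (R:=R) A = Delta (R:=R) A.
Proof.
move=> _ HN.
have opp i : exists j, A j = (fun t => - A i t).
  have : normals A (A i) by exists i.
  rewrite HN => -[j hj]; by exists j.
apply/seteqP; split => U.
- move=> [c [-> [y Hy]]].
  pose s i := dotZ (A i) y == (c i)%:~R.
  pose k i := if s i then c i else c i - 1.
  have E : upper_region (R:=R) A c = arr_cell A s k.
    apply/seteqP; split => x Hx i /=.
      have [j hj] := opp i.
      have [y1 y2] := Hy i; have [y3 y4] := Hy j.
      have [x1 x2] := Hx i; have [x3 x4] := Hx j.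
      rewrite hj dotZN in y3; rewrite hj dotZN in y4;
      rewrite hj dotZN in x3; rewrite hj dotZN in x4.
      have := @coordL R _ _ _ _ y1 y2 y3 y4 x1 x2 x3 x4.
      by rewrite /k /s; case: eqP.
    have := Hx i; rewrite /k /s; case: eqP => _.
      move=> ->; split => //; lra.
    rewrite intrB => -[h1 h2]; split; lra.
  exists s, k; split; [exact: E | by exists y].
- move=> [s [k [-> [y Hy]]]].
  pose c i := if s i then k i else k i + 1.
  have E : arr_cell (R:=R) A s k = upper_region A c.
    apply/seteqP; split => x Hx i /=.
      have := Hx i; rewrite /c; case: (s i).
        move=> ->; split => //; lra.
      rewrite intrD => -[h1 h2]; split; lra.
    have [j hj] := opp i.
    have := Hy i; have := Hy j; have := Hx i; have := Hx j.
    rewrite hj !dotZN => h1 h2 h3 h4.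
    exact: (@coordD R _ _ _ _ _ _ h4) h3 h2 h1.
  exists c; split; [exact: E | by exists y].
Qed.
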